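(* Let $S$ be a Damek–Ricci space with $\mathfrak{s}=\mathfrak{a}\oplus\mathfrak{v}\oplus\mathfrak{z}$. Let $\Sigma$ be a totally geodesic subgroup of $S$ with $T_e\Sigma=\mathfrak{a}\oplus\mathfrak{v}'\oplus\mathfrak{z}'$, where $\mathfrak{v}'\subseteq\mathfrak{v}$ and $\mathfrak{z}'\subseteq\mathfrak{z}$. Let $H$ be a closed subgroup of $S$ whose Lie algebra $\mathfrak{h}$ is orthogonal to $T_e\Sigma$, and let $\eta$ be a Killing vector field induced by the action of $H$ on $S$ by left translations. Write $\eta(e)=X+U$ with $U\in\mathfrak{v}$, $X\in\mathfrak{z}$. Then the following are equivalent: (i) $\langle\nabla_v\eta,w\rangle=0$ for all $v,w\in T_e\Sigma$; (ii) $J_X\mathfrak{v}'\perp\mathfrak{v}'$.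
   Context: Damek–Ricci space: let $\mathfrak{n}=\mathfrak{v}\oplus\mathfrak{z}$ be a real Lie algebra with inner product $\langle\cdot,\cdot\rangle$ such that $\mathfrak{v}\perp\mathfrak{z}$, $[\mathfrak{v},\mathfrak{v}]\subseteq\mathfrak{z}$, $[\mathfrak{v},\mathfrak{z}]=[\mathfrak{z},\mathfrak{z}]=0$; define $J_Z\in\mathrm{End}(\mathfrak{v})$ for $Z\in\mathfrak{z}$ by $\langle J_ZU,V\rangle=\langle[U,V],Z\rangle$, and assume $J_Z^2=-\langle Z,Z\rangle\mathrm{id}_{\mathfrak{v}}$. Let $\mathfrak{a}=\mathbb{R}A$, $\mathfrak{s}=\mathfrak{a}\oplus\mathfrak{n}$ with $[A,U]=\tfrac12U$ ($U\in\mathfrak{v}$), $[A,X]=X$ ($X\in\mathfrak{z}$), inner product extended with $A$ a unit vector orthogonal to $\mathfrak{n}$. $S$ is the simply connected Lie group with Lie algebra $\mathfrak{s}$ with the induced left-invariant metric, identity $e$, $T_eS=\mathfrak{s}$, Levi-Civita connection $\nabla$. The Killing field induced by $Y\in\mathfrak{h}$ under left translations is $p\mapsto\frac{d}{dt}\big|_{t=0}\exp(tY)p$ (the right-invariant extension of $Y$). *)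

(* Defs.v *)
(* Lie-algebra level model of a Damek-Ricci space. *)
From HB Require Import structures.
From mathcomp Require Import all_boot all_order all_algebra.
Set Implicit Arguments. Unset Strict Implicit. Unset Printing Implicit Defensive.
Import Order.TTheory GRing.Theory Num.Theory.
Local Open Scope ring_scope.

Section DR.
Variables (R : realFieldType) (n m : nat).

Definition dotv (U V : 'rV[R]_n) : R := (U *m V^T) 0 0.
Definition dotz (X Y : 'rV[R]_m) : R := (X *m Y^T) 0 0.

Definition is_bracket (br : 'rV[R]_n -> 'rV[R]_n -> 'rV[R]_m) : Prop :=
  (forall V, linear (br ^~ V)) /\ (forall U, linear (br U)) /\
  (forall U V, br U V = - br V U).

(* J_Z defined by <J_Z U, V> = <[U,V], Z>  (coordinates in the standard basis) *)
Definition Jmap (br : 'rV[R]_n -> 'rV[R]_n -> 'rV[R]_m) (Z : 'rV[R]_m)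
  (U : 'rV[R]_n) : 'rV[R]_n :=
  \row_j dotz (br U (delta_mx 0 j)) Z.

Definition Htype (br : 'rV[R]_n -> 'rV[R]_n -> 'rV[R]_m) : Prop :=
  is_bracket br /\
  forall Z U, Jmap br Z (Jmap br Z U) = - (dotz Z Z) *: U.

(* s = a + v + z, an element is (a, U, X) meaning a A + U + X *)
Definition sT := (R * 'rV[R]_n * 'rV[R]_m)%type.

Definition s_add (x y : sT) : sT := (x.1.1 + y.1.1, x.1.2 + y.1.2, x.2 + y.2).
Definition s_scale (c : R) (x : sT) : sT := (c * x.1.1, c *: x.1.2, c *: x.2).
Definition s_zero : sT := (0, 0, 0).

Definition s_ip (x y : sT) : R := x.1.1 * y.1.1 + dotv x.1.2 y.1.2 + dotz x.2 y.2.

Definition s_br (br : 'rV[R]_n -> 'rV[R]_n -> 'rV[R]_m) (x y : sT) : sT :=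
  (0,
   (x.1.1 / 2%:R) *: y.1.2 - (y.1.1 / 2%:R) *: x.1.2,
   x.1.1 *: y.2 - y.1.1 *: x.2 + br x.1.2 y.1.2).

(* Levi-Civita connection of the left-invariant metric, on left-invariant
   fields (Koszul formula):  s_nabla_ip br x y w = < nabla_x y , w >  *)
Definition s_nabla_ip br (x y w : sT) : R :=
  (s_ip (s_br br x y) w - s_ip (s_br br y w) x + s_ip (s_br br w x) y) / 2%:R.

(* For the Killing field eta induced by Y (right-invariant extension of Y),
   [V^L, eta] = 0 for left-invariant V^L, so at e:
   < nabla_v eta , w > = < nabla_Y v , w >  (left-invariant connection). *)
Definition killing_nabla_ip br (Y v w : sT) : R := s_nabla_ip br Y v w.

(* T_e Sigma = a + v' + z', with v' = row space of V', z' = row space of Z' *)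
Definition in_sub (V' : 'M[R]_n) (Z' : 'M[R]_m) (x : sT) : Prop :=
  (x.1.2 <= V')%MS /\ (x.2 <= Z')%MS.

Definition is_subalgebra br (P : sT -> Prop) : Prop :=
  P s_zero /\ (forall x y, P x -> P y -> P (s_add x y)) /\
  (forall c x, P x -> P (s_scale c x)) /\
  (forall x y, P x -> P y -> P (s_br br x y)).

(* Sigma: connected subgroup with Lie algebra T_e Sigma, totally geodesic:
   second fundamental form (nabla_V W)^perp vanishes (left-invariant, so
   checked at e on left-invariant fields). *)
Definition totally_geodesic_subalg br (P : sT -> Prop) : Prop :=
  is_subalgebra br P /\
  forall v w N, P v -> P w -> (forall u, P u -> s_ip N u = 0) ->
    s_nabla_ip br v w N = 0.

End DR.

(* Main.v *)
Require Import Defs.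
From HB Require Import structures.
From mathcomp Require Import all_boot all_order all_algebra.
From mathcomp Require Import ring lra.
Import Order.TTheory GRing.Theory Num.Theory.
Local Open Scope ring_scope.

Section Aux.
Local Set Implicit Arguments.
Variables (R : realFieldType) (k : nat).
Definition rd (A B : 'rV[R]_k) : R := (A *m B^T) 0 0.
Lemma rdDl A B C : rd (A + B) C = rd A C + rd B C.
Proof. by rewrite /rd mulmxDl mxE. Qed.
Lemma rdDr A B C : rd C (A + B) = rd C A + rd C B.
Proof. by rewrite /rd linearD /= mulmxDr mxE. Qed.
Lemma rdNl A C : rd (- A) C = - rd A C.
Proof. by rewrite /rd mulNmx mxE. Qed.
Lemma rdNr A C : rd C (- A) = - rd C A.
Proof. by rewrite /rd linearN /= mulmxN mxE. Qed.
Lemma rdZl a A C : rd (a *: A) C = a * rd A C.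
Proof. by rewrite /rd -scalemxAl mxE. Qed.
Lemma rdZr a A C : rd C (a *: A) = a * rd C A.
Proof. by rewrite /rd linearZ /= -scalemxAr mxE. Qed.
Lemma rd0l C : rd 0 C = 0.
Proof. by rewrite /rd mul0mx mxE. Qed.
Lemma rd0r C : rd C 0 = 0.
Proof. by rewrite /rd linear0 mulmx0 mxE. Qed.
Lemma rdC A B : rd A B = rd B A.
Proof. by rewrite /rd -{1}(trmxK A) -trmx_mul mxE. Qed.
End Aux.
Arguments rd {R k}.

Definition rdE := (rdDl, rdDr, rdNl, rdNr, rdZl, rdZr, rd0l, rd0r).

Lemma dotvE {R : realFieldType} {n} (A B : 'rV[R]_n) : dotv A B = rd A B.
Proof. by []. Qed.
Lemma dotzE {R : realFieldType} {n} (A B : 'rV[R]_n) : dotz A B = rd A B.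
Proof. by []. Qed.

Lemma Jmap_dot (R : realFieldType) (n m : nat)
  (br : 'rV[R]_n -> 'rV[R]_n -> 'rV[R]_m) X U V :
  is_bracket br -> dotv (Jmap br X U) V = dotz (br U V) X.
Proof.
move=> [_ [lin _]].
have linE a u v : br U (a *: u + v) = a *: br U u + br U v := lin U a u v.
have f0 : br U 0 = 0.
  have := lin U 1 0 0; rewrite !scale1r addr0.
  by move=> /(congr1 (fun z => z - br U 0)); rewrite subrr addrK => ->.
have fD u v : br U (u + v) = br U u + br U v by have := linE 1 u v; rewrite !scale1r.
have fZ a u : br U (a *: u) = a *: br U u by have := linE a u 0; rewrite !addr0 f0 addr0.
rewrite dotvE dotzE /rd mxE {2}(row_sum_delta V).
apply: (big_rec2 (fun x y => x = ((br U y) *m X^T) 0 0)).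
  by rewrite f0 mul0mx mxE.
move=> j x y _ ->.
rewrite fD fZ mulmxDl -scalemxAl !mxE mulrC.
by rewrite /dotz mxE.
Qed.

Lemma geo_fact (R : realFieldType) (n m : nat)
  (br : 'rV[R]_n -> 'rV[R]_n -> 'rV[R]_m) (V' : 'M[R]_n) (Z' : 'M[R]_m) P V Z :
  totally_geodesic_subalg br (in_sub V' Z') ->
  (forall W, (W <= V')%MS -> dotv P W = 0) -> (V <= V')%MS -> (Z <= Z')%MS ->
  dotz (br P V) Z = 0.
Proof.
move=> [_ tg] hP hV hZ.
have h1 : in_sub V' Z' (0, V, 0) by split; rewrite //= sub0mx.
have h2 : in_sub V' Z' (0, 0, Z) by split; rewrite //= sub0mx.
have h3 : forall u, in_sub V' Z' u -> s_ip (0, P, 0) u = 0.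
  move=> u [hu _]; rewrite /s_ip /= hP // dotzE rd0l; ring.
have := tg _ _ _ h1 h2 h3.
rewrite /s_nabla_ip /s_ip /s_br /= ?dotvE ?dotzE !rdE.
move=> H; lra.
Qed.
Lemma formula (R : realFieldType) (n m : nat)
  (br : 'rV[R]_n -> 'rV[R]_n -> 'rV[R]_m) (V' : 'M[R]_n) (Z' : 'M[R]_m) U X v w :
  is_bracket br ->
  totally_geodesic_subalg br (in_sub V' Z') ->
  (forall W, (W <= V')%MS -> dotv U W = 0) ->
  (forall Z, (Z <= Z')%MS -> dotz X Z = 0) ->
  in_sub V' Z' v -> in_sub V' Z' w ->
  killing_nabla_ip br (0, U, X) v w = - dotz (br v.1.2 w.1.2) X / 2%:R.
Proof.
move=> hbr tg hU hX.
case: v => [[a1 V1] Z1]; case: w => [[a2 V2] Z2] [/= hV1 hZ1] [/= hV2 hZ2].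
have g1 := @geo_fact _ _ _ br V' Z' U V1 Z2 tg hU hV1 hZ2.
have g2 := @geo_fact _ _ _ br V' Z' U V2 Z1 tg hU hV2 hZ1.
case: hbr => [_ [_ skew]].
rewrite /killing_nabla_ip /s_nabla_ip /s_ip /s_br /= (skew V2 U) ?dotvE ?dotzE !rdE.
rewrite [rd V1 U]rdC [rd V2 U]rdC [rd Z1 X]rdC [rd Z2 X]rdC.
have e1 : rd U V1 = 0 := hU V1 hV1.
have e2 : rd U V2 = 0 := hU V2 hV2.
have e3 : rd X Z1 = 0 := hX Z1 hZ1.
have e4 : rd X Z2 = 0 := hX Z2 hZ2.
have e5 : rd (br U V1) Z2 = 0 := g1.
have e6 : rd (br U V2) Z1 = 0 := g2.
rewrite e1 e2 e3 e4 e5 e6 ?dotzE; ring.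
Qed.
Theorem lemma3p3 (R : realFieldType) (n m : nat)
  (br : 'rV[R]_n -> 'rV[R]_n -> 'rV[R]_m)
  (V' : 'M[R]_n) (Z' : 'M[R]_m) (h : sT R n m -> Prop) (Y : sT R n m) :
  Htype br ->
  totally_geodesic_subalg br (in_sub V' Z') ->
  is_subalgebra br h ->
  (forall x y, h x -> in_sub V' Z' y -> s_ip x y = 0) ->
  h Y ->
  (forall v w, in_sub V' Z' v -> in_sub V' Z' w -> killing_nabla_ip br Y v w = 0)
  <->
  (forall U V, (U <= V')%MS -> (V <= V')%MS -> dotv (Jmap br Y.2 U) V = 0).
Proof.
move=> [hbr _] tg _ hperp hY.
case: Y hY => [[a U] X] hY /=.
have ha : a = 0.
  have := hperp _ (1, 0, 0) hY (conj (sub0mx _ _) (sub0mx _ _)).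
  by rewrite /s_ip /= ?dotvE ?dotzE !rdE => E; rewrite -E; ring.
have hU : forall W, (W <= V')%MS -> dotv U W = 0.
  move=> W hW; have := hperp _ (0, W, 0) hY (conj hW (sub0mx _ _)).
  by rewrite /s_ip /= ?dotvE ?dotzE !rdE => E; rewrite -E; ring.
have hX : forall Z, (Z <= Z')%MS -> dotz X Z = 0.
  move=> Z hZ; have := hperp _ (0, 0, Z) hY (conj (sub0mx _ _) hZ).
  by rewrite /s_ip /= ?dotvE ?dotzE !rdE => E; rewrite -E; ring.
subst a.
have F := @formula _ _ _ br V' Z' U X _ _ hbr tg hU hX.
split.
- move=> H U1 V1 h1 h2.
  have := H (0, U1, 0) (0, V1, 0) (conj h1 (sub0mx _ _)) (conj h2 (sub0mx _ _)).
  rewrite F /= ?(conj h1 (sub0mx _ _)) ?(conj h2 (sub0mx _ _)); last 2 first.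
  + exact: (conj h1 (sub0mx _ _)).
  + exact: (conj h2 (sub0mx _ _)).
  rewrite Jmap_dot // => E; lra.
- move=> H v w hv hw.
  rewrite F // -Jmap_dot //.
  have -> : dotv (Jmap br X v.1.2) w.1.2 = 0 by apply: H; [case: hv | case: hw].
  by rewrite oppr0 mul0r.
Qed.
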